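(* Let $\delta$ be a root of the quadratic polynomial $\mathsf{u}(\mathsf{z}+1)^2-(\mathsf{v}-1)(\mathsf{z}+1)-1$ in an algebraic closure of $\mathbb{K}=\mathbb{C}(\mathsf{u},\mathsf{v})$, and let $\mathbb{L}=\mathbb{K}(\delta)$. Put $\mathsf{q}:=\mathsf{u}(\delta+1)^2\in\mathbb{L}$. Then the assignment $R_i\mapsto T_i:=R_i+\delta E_iR_i$, $E_i\mapsto E_i$ ($1\le i\le n-1$) induces an isomorphism of $\mathbb{L}$-algebras between $\mathcal{E}_n(\mathsf{u},\mathsf{v})\otimes_{\mathbb{K}}\mathbb{L}$ and the one-parameter bt-algebra $\mathcal{E}_n(\mathsf{q})$ over $\mathbb{L}$; that is, the elements $T_i$ and $E_i$ satisfy all the defining relations of $\mathcal{E}_n(\mathsf{q})$, in particular $T_i^2=1+(\mathsf{q}-1)E_i+(\mathsf{q}-1)E_iT_i$, and they generate.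
   Context: Let $\mathsf{u},\mathsf{v}$ be commuting indeterminates and $\mathbb{K}=\mathbb{C}(\mathsf{u},\mathsf{v})$. The two-parameter bt-algebra $\mathcal{E}_n(\mathsf{u},\mathsf{v})$ is $\mathbb{K}$ for $n=1$, and for $n\ge 2$ the unital associative $\mathbb{K}$-algebra generated by $R_1,\dots,R_{n-1},E_1,\dots,E_{n-1}$ subject to: $E_iE_j=E_jE_i$ for all $i,j$; $E_i^2=E_i$; $E_iR_j=R_jE_i$ for $|i-j|>1$; $E_iR_i=R_iE_i$; $E_iR_jR_i=R_jR_iE_j$ for $|i-j|=1$; $E_iE_jR_i=E_jR_iE_j=R_iE_iE_j$ for $|i-j|=1$; $R_iR_j=R_jR_i$ for $|i-j|>1$; $R_iR_jR_i=R_jR_iR_j$ for $|i-j|=1$; and $R_i^2=1+(\mathsf{u}-1)E_i+(\mathsf{v}-1)E_iR_i$ for all $i$. For a field $F$ and $\mathsf{q}\in F$ (or an indeterminate), the one-parameter bt-algebra $\mathcal{E}_n(\mathsf{q})$ over $F$ is the unital $F$-algebra generated by $T_1,\dots,T_{n-1},E_1,\dots,E_{n-1}$ subject to the same relations with $R_i$ replaced by $T_i$, except that the quadratic relation is $T_i^2=1+(\mathsf{q}-1)E_i+(\mathsf{q}-1)E_iT_i$. *)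

(* Defs.v *)
From HB Require Import structures.
From mathcomp Require Import all_boot all_order all_algebra.
Set Implicit Arguments. Unset Strict Implicit. Unset Printing Implicit Defensive.
Import GRing.Theory.
Local Open Scope ring_scope.

(* Generators R_1..R_{n-1}, E_1..E_{n-1} are indexed by i : 'I_n.-1
   (i.e. paper index = val i + 1).  Distance |i - j| of indices: *)
Definition idist (m : nat) (i j : 'I_m) : nat := (maxn i j - minn i j)%N.

Definition bt_rels (L : fieldType) (A : algType L) (n : nat) (a b : L)
    (R E : 'I_n.-1 -> A) : Prop :=
  (forall i j, E i * E j = E j * E i) /\
      (forall i, E i * E i = E i) /\
      (forall i j, (1 < idist i j)%N -> E i * R j = R j * E i) /\
      (forall i, E i * R i = R i * E i) /\
      (forall i j, idist i j = 1%N -> E i * R j * R i = R j * R i * E j) /\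
      (forall i j, idist i j = 1%N ->
          E i * E j * R i = E j * R i * E j /\ E j * R i * E j = R i * E i * E j) /\
      (forall i j, (1 < idist i j)%N -> R i * R j = R j * R i) /\
      (forall i j, idist i j = 1%N -> R i * R j * R i = R j * R i * R j) /\
      (forall i, R i * R i = 1 + (a - 1) *: E i + (b - 1) *: (E i * R i)).

Definition two_param_rels (L : fieldType) (A : algType L) (n : nat) (u v : L)
    (R E : 'I_n.-1 -> A) : Prop := @bt_rels L A n u v R E.

Definition one_param_rels (L : fieldType) (A : algType L) (n : nat) (q : L)
    (T E : 'I_n.-1 -> A) : Prop := @bt_rels L A n q q T E.

Definition is_presented_by (L : fieldType) (n : nat)
    (rels : forall B : algType L, ('I_n.-1 -> B) -> ('I_n.-1 -> B) -> Prop)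
    (A : algType L) (R E : 'I_n.-1 -> A) : Prop :=
  rels A R E /\
  forall (B : algType L) (R' E' : 'I_n.-1 -> B), rels B R' E' ->
    exists f : {lrmorphism A -> B},
      [/\ (forall i, f (R i) = R' i), (forall i, f (E i) = E' i) &
          forall g : {lrmorphism A -> B},
            (forall i, g (R i) = R' i) -> (forall i, g (E i) = E' i) ->
            forall x, g x = f x].

(* Main.v *)
Require Import Defs.
From HB Require Import structures.
From mathcomp Require Import all_boot all_order all_algebra.
From mathcomp Require Import ring.
Import GRing.Theory.
Local Open Scope ring_scope.

Section Loc.
Variables (L : fieldType) (A : algType L) (a b d : L) (e f x y : A).
Hypotheses (ee : e * e = e) (ff : f * f = f) (efC : e * f = f * e)
  (ex : e * x = x * e) (fy : f * y = y * f)
  (a1 : e * y * x = y * x * f) (a2 : f * x * y = x * y * e)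
  (b1 : e * f * x = f * x * f) (b2 : f * x * f = x * e * f)
  (b3 : f * e * y = e * y * e) (b4 : e * y * e = y * f * e)
  (br : x * y * x = y * x * y)
  (qx : x * x = 1 + (a - 1) *: e + (b - 1) *: (e * x)).

Variables (p p' : A).
Hypotheses (hp : p = 1 + d *: e) (hp' : p' = 1 + d *: f).

Lemma pxC : p * x = x * p.
Proof. by rewrite hp mulrDl mulrDr mul1r mulr1 -scalerAl -scalerAr ex. Qed.
Lemma peC : p * e = e * p.
Proof. by rewrite hp mulrDl mulrDr mul1r mulr1 -scalerAl -scalerAr. Qed.
Lemma pfC : p * f = f * p.
Proof. by rewrite hp mulrDl mulrDr mul1r mulr1 -scalerAl -scalerAr efC. Qed.
Lemma p'eC : p' * e = e * p'.
Proof. by rewrite hp' mulrDl mulrDr mul1r mulr1 -scalerAl -scalerAr efC. Qed.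
Lemma pp'C : p * p' = p' * p.
Proof. by rewrite hp' mulrDr mulr1 -scalerAr pfC scalerAl mulrDl mul1r. Qed.

Lemma eC : e * (x * f * y * x) = x * y * x * (e * f).
Proof.
rewrite !mulrA ex -(mulrA x e f) efC.
have -> : x * (f * e) * y = x * (y * f * e) by rewrite -b4 -b3 !mulrA.
by rewrite !mulrA -(mulrA (x*y) f e) -efC !mulrA -(mulrA (x*y) e f) -(mulrA (x*y) (e*f) x) b1 b2 !mulrA.
Qed.

Lemma eB : e * (x*y*x) = x*y*x*f.
Proof. by rewrite br !mulrA a1 -mulrA fy mulrA. Qed.
Lemma Be : x*y*x*e = f*(x*y*x).
Proof. by rewrite br -!mulrA (mulrA x y e) -a2 !mulrA fy. Qed.
Lemma Ce : x*f*y*x*e = x*y*x*(e*f).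
Proof.
rewrite -(mulrA x f y) fy !mulrA -(mulrA _ x e) -ex -(mulrA _ f (e*x)) (mulrA f e x) -efC.
by rewrite b1 b2 !mulrA.
Qed.
Lemma eD : e * (y*e*x*y) = x*y*x*(e*f).
Proof.
rewrite !mulrA -b3 -(mulrA (f*e*y) x y) -(mulrA (f*e) y (x*y)) (mulrA y x y) -br.
by rewrite -(mulrA f e) eB mulrA -Be -mulrA.
Qed.
Lemma xxf : x*x*f = f*(x*x).
Proof.
rewrite qx mulrDl mulrDr !mulrDl !mulrDr mul1r mulr1 -!scalerAl -!scalerAr efC.
congr (_ + _ + _ *: _).
by rewrite (mulrA f e x) -efC b1 b2 -ex.
Qed.
Lemma xCD : x * (x*f*y*x) = x * (y*e*x*y).
Proof.
rewrite !mulrA xxf !mulrA -(mulrA (f*x*x) y x) -(mulrA (f*x) x (y*x)) (mulrA x y x) br.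
by rewrite !mulrA a2.
Qed.
Lemma CD : x*f*y*x = y*e*x*y.
Proof.
apply/eqP; rewrite -subr_eq0; apply/eqP.
pose z := x*f*y*x - y*e*x*y.
have h1 : e * z = 0 by rewrite /z mulrBr eC eD subrr.
have h2 : x * z = 0 by rewrite /z mulrBr xCD subrr.
have h3 : (x - (b-1)*:e) * x = 1 + (a-1)*:e by rewrite mulrBl -scalerAl qx addrK.
have : (1 + (a-1)*:e) * z = 0 by rewrite -h3 -mulrA h2 mulr0.
by rewrite mulrDl mul1r -scalerAl h1 scaler0 addr0.
Qed.

Lemma tE : x + d *: (e*x) = p*x.
Proof. by rewrite hp mulrDl mul1r scalerAl. Qed.
Lemma T3 : (p * x) * (p' * y) * (p * x) = p * (x*y*x) * p + d *: (p * (x*f*y*x) * p).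
Proof.
rewrite [in X in _ * X = _]pxC !mulrA -(mulrA (p*x)) -(mulrA p x) -(mulrA p _ x).
rewrite hp' mulrDl mul1r -scalerAl mulrDr mulrDl mulrDr mulrDl -scalerAr -!scalerAl -scalerAr.
by rewrite -scalerAl !mulrA.
Qed.
Lemma pB : p * (x*y*x) = x*y*x * p'.
Proof. by rewrite hp hp' mulrDl mulrDr mul1r mulr1 -scalerAl -scalerAr eB. Qed.
Lemma pBp : p * (x*y*x) * p = x*y*x * (p' * p).
Proof. by rewrite pB -mulrA. Qed.
Lemma pCp : p * (x*f*y*x) * p = x*f*y*x + (d+d+d*d) *: (x*y*x*(e*f)).
Proof.
rewrite hp !mulrDl !mulrDr !mul1r !mulr1 -!scalerAl -!scalerAr !scalerA eC Ce.
rewrite -(mulrA (x*y*x)) -(mulrA e f e) -efC (mulrA e e f) ee -!addrA; congr (_ + _).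
by rewrite !scalerDl addrA.
Qed.
End Loc.

Lemma commZ (L : fieldType) (A : algType L) (k : L) (x y : A) :
  GRing.comm x y -> GRing.comm x (k *: y).
Proof. by rewrite /GRing.comm -scalerAr -scalerAl => ->. Qed.

Lemma braidT (L : fieldType) (A : algType L) (a b d : L) (e f x y : A)
  (ee : e * e = e) (ff : f * f = f) (efC : e * f = f * e)
  (ex : e * x = x * e) (fy : f * y = y * f)
  (a1 : e * y * x = y * x * f) (a2 : f * x * y = x * y * e)
  (b1 : e * f * x = f * x * f) (b2 : f * x * f = x * e * f)
  (b3 : f * e * y = e * y * e) (b4 : e * y * e = y * f * e)
  (br : x * y * x = y * x * y)
  (qx : x * x = 1 + (a - 1) *: e + (b - 1) *: (e * x)) :
  (x + d *: (e * x)) * (y + d *: (f * y)) * (x + d *: (e * x)) =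
  (y + d *: (f * y)) * (x + d *: (e * x)) * (y + d *: (f * y)).
Proof.
pose p := 1 + d *: e; pose p' := 1 + d *: f.
rewrite (@tE _ _ d e x p erefl) (@tE _ _ d f y p' erefl).
rewrite (@T3 _ _ d e f x y ex p p' erefl erefl) (@T3 _ _ d f e y x fy p' p erefl erefl).
rewrite (@pBp _ _ d e f x y fy a1 br p p' erefl erefl).
rewrite (@pBp _ _ d f e y x ex a2 (esym br) p' p erefl erefl).
rewrite (@pCp _ _ d e f x y ee efC ex fy b1 b2 b3 b4 p erefl).
rewrite (@pCp _ _ d f e y x ff (esym efC) fy ex b3 b4 b1 b2 p' erefl).
rewrite (@CD _ _ a b e f x y efC ex fy a1 a2 b1 b2 b3 b4 br qx) -br -efC.
by rewrite (@pp'C _ _ d e f efC p p' erefl erefl).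
Qed.


Lemma R5 (L : fieldType) (A : algType L) (d : L) (e f x y : A)
  (efC : e * f = f * e) (ex : e * x = x * e) (fy : f * y = y * f)
  (a1 : e * y * x = y * x * f) :
  e * (y + d *: (f * y)) * (x + d *: (e * x)) =
  (y + d *: (f * y)) * (x + d *: (e * x)) * f.
Proof.
pose p := 1 + d *: e; pose p' := 1 + d *: f.
rewrite (@tE _ _ d e x p erefl) (@tE _ _ d f y p' erefl).
have pe : e * p' = p' * e.
  by rewrite /p' mulrDl mulrDr mul1r mulr1 -scalerAl -scalerAr efC.
have px : p * x = x * p.
  by rewrite /p mulrDl mulrDr mul1r mulr1 -scalerAl -scalerAr ex.
have pf : p * f = f * p.
  by rewrite /p mulrDl mulrDr mul1r mulr1 -scalerAl -scalerAr efC.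
transitivity (p' * (e * y * x) * p).
  by rewrite px !mulrA pe.
rewrite a1 px !mulrA -(mulrA _ p f) pf !mulrA.
done.
Qed.

Lemma R6 (L : fieldType) (A : algType L) (d : L) (e f x : A)
  (efC : e * f = f * e) (ex : e * x = x * e)
  (b1 : e * f * x = f * x * f) (b2 : f * x * f = x * e * f) :
  e * f * (x + d *: (e * x)) = f * (x + d *: (e * x)) * f /\
  f * (x + d *: (e * x)) * f = (x + d *: (e * x)) * e * f.
Proof.
pose p := 1 + d *: e.
rewrite (@tE _ _ d e x p erefl).
have px : p * x = x * p.
  by rewrite /p mulrDl mulrDr mul1r mulr1 -scalerAl -scalerAr ex.
have pf : p * f = f * p.
  by rewrite /p mulrDl mulrDr mul1r mulr1 -scalerAl -scalerAr efC.
have pe : p * e = e * p.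
  by rewrite /p mulrDl mulrDr mul1r mulr1 -scalerAl -scalerAr .
have h1 : e * f * (p * x) = p * (e * f * x).
  by rewrite !mulrA -(mulrA e f p) -pf mulrA -pe.
have h2 : f * (p * x) * f = p * (f * x * f).
  by rewrite !mulrA -pf.
have h3 : p * x * e * f = p * (x * e * f).
  by rewrite !mulrA.
by rewrite h1 h2 h3 b1 b2.
Qed.


Lemma regroup (L : fieldType) (V : lmodType L) (o u w : V) (c1 c2 c3 c4 c5 c6 : L) :
  c1 + c3 = c5 -> c2 + c4 = c6 ->
  o + c1 *: u + c2 *: w + (c3 *: u + c4 *: w) = o + c5 *: u + c6 *: w.
Proof.
by move=> <- <-; rewrite addrACA -addrA -!scalerDl addrA -(addrA o) -scalerDl.
Qed.

Lemma QT (L : fieldType) (A : algType L) (a b a' b' d : L) (e x : A)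
  (ee : e * e = e) (ex : e * x = x * e)
  (qx : x * x = 1 + (a - 1) *: e + (b - 1) *: (e * x))
  (ha : a' = a * (1 + d) ^+ 2) (hb : b' - 1 = (b - 1) * (1 + d)) :
  (x + d *: (e * x)) * (x + d *: (e * x)) =
  1 + (a' - 1) *: e + (b' - 1) *: (e * (x + d *: (e * x))).
Proof.
pose p := 1 + d *: e.
have px : p * x = x * p.
  by rewrite /p mulrDl mulrDr mul1r mulr1 -scalerAl -scalerAr ex.
have pp : p * p = 1 + (d + d + d * d) *: e.
  rewrite /p !mulrDl !mulrDr !mul1r !mulr1 -scalerAl -scalerAr ee scalerA.
  by rewrite !scalerDl !addrA.
have exx : e * (x * x) = a *: e + (b - 1) *: (e * x).
  rewrite qx !mulrDr mulr1 -!scalerAr ee mulrA ee; congr (_ + _).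
  by rewrite -{1}(scale1r e) -scalerDl addrC subrK.
have ext : e * (x + d *: (e * x)) = (1 + d) *: (e * x).
  by rewrite mulrDr -scalerAr mulrA ee scalerDl scale1r.
rewrite ext (@tE _ _ d e x p erefl) -mulrA (mulrA x p x) -px -mulrA mulrA pp.
rewrite mulrDl mul1r -scalerAl exx qx scalerA.
rewrite scalerDr !scalerA; apply: regroup.
  by rewrite ha; ring.
by rewrite hb; ring.
Qed.


Lemma idistC m (i j : 'I_m) : idist i j = idist j i.
Proof. by rewrite /idist maxnC minnC. Qed.

Lemma transfer (L : fieldType) (A : algType L) n (a b a' b' d : L)
  (R E : 'I_n.-1 -> A) :
  a' = a * (1 + d) ^+ 2 -> b' - 1 = (b - 1) * (1 + d) ->
  bt_rels a b R E -> bt_rels a' b' (fun i => R i + d *: (E i * R i)) E.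
Proof.
move=> ha hb [HEE [HEi [HER [HERi [HE5 [HE6 [HRR [HBr HQ]]]]]]]].
have HEE' i j : E i * E j = E j * E i := HEE i j.
split; first exact: HEE.
split; first exact: HEi.
split.
  move=> i j hij /=.
  rewrite mulrDr mulrDl -scalerAr -scalerAl (HER i j hij) mulrA (HEE i j) -mulrA (HER i j hij) mulrA.
  done.
split.
  move=> i /=.
  by rewrite mulrDr mulrDl -scalerAr -scalerAl (HERi i) !mulrA (HERi i).
split.
  move=> i j hij /=.
  have hji : idist j i = 1%N by rewrite idistC.
  exact: (@R5 _ _ d (E i) (E j) (R i) (R j) (HEE i j) (HERi i) (HERi j) (HE5 i j hij)).
split.
  move=> i j hij /=.
  exact: (@R6 _ _ d (E i) (E j) (R i) (HEE i j) (HERi i) (HE6 i j hij).1 (HE6 i j hij).2).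
split.
  move=> i j hij /=.
  have hji : (1 < idist j i)%N by rewrite idistC.
  rewrite !mulrDr !mulrDl -!scalerAr -!scalerAl !mulrA.
  have h : E i*R i*E j*R j = E j*R j*E i*R i.
    rewrite -(mulrA (E i)) -(HER j i hji) mulrA (HEE i j) -!mulrA (HRR i j hij) !mulrA.
    by rewrite -(mulrA (E j) (E i) (R j)) (HER i j hij) !mulrA.
  have t2 : E i*R i*R j = R j*E i*R i.
    by rewrite -mulrA (HRR i j hij) mulrA (HER i j hij).
  have t3 : R i*E j*R j = E j*R j*R i.
    by rewrite -(HER j i hji) -mulrA (HRR i j hij) mulrA.
  rewrite h t2 t3 (HRR i j hij) -!addrA; congr (_ + _).
  by rewrite !addrA (addrC (d *: (R j*E i*R i))).
split.
  move=> i j hij /=.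
  have hji : idist j i = 1%N by rewrite idistC.
  exact: (@braidT _ _ a b d (E i) (E j) (R i) (R j) (HEi i) (HEi j) (HEE i j)
    (HERi i) (HERi j) (HE5 i j hij) (HE5 j i hji) (HE6 i j hij).1 (HE6 i j hij).2
    (HE6 j i hji).1 (HE6 j i hji).2 (HBr i j hij) (HQ i)).
move=> i /=.
exact: (@QT _ _ a b a' b' d (E i) (R i) (HEi i) (HERi i) (HQ i) ha hb).
Qed.


Lemma back (L : fieldType) (A : algType L) (e t : A) (c1 c2 : L) :
  e * e = e -> c1 + c2 + c2 * c1 = 0 ->
  t + c1 *: (e * t) + c2 *: (e * (t + c1 *: (e * t))) = t.
Proof.
move=> ee hc.
rewrite mulrDr -scalerAr mulrA ee -{2}(scale1r (e * t)) -scalerDl scalerA -addrA -scalerDl.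
by rewrite mulrDr mulr1 addrA hc scale0r addr0.
Qed.

Theorem proposition1 (L : fieldType) (u v delta : L) (n : nat) :
  (0 < n)%N ->
  u * (delta + 1) ^+ 2 - (v - 1) * (delta + 1) - 1 = 0 ->
  forall (A : algType L) (R E : 'I_n.-1 -> A),
    is_presented_by (fun B => @two_param_rels L B n u v) R E ->
  forall (B : algType L) (T E' : 'I_n.-1 -> B),
    is_presented_by (fun B => @one_param_rels L B n (u * (delta + 1) ^+ 2)) T E' ->
  @one_param_rels L A n (u * (delta + 1) ^+ 2) (fun i => R i + delta *: (E i * R i)) E /\
  exists f : {lrmorphism B -> A},
    [/\ bijective f,
        (forall i, f (T i) = R i + delta *: (E i * R i)) &
        (forall i, f (E' i) = E i)].
Proof.
move=> hn hq A R E [HA UA] B T E' [HB UB].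
have d1 : 1 + delta != 0.
  apply/negP => /eqP h0; move: hq; rewrite (addrC delta 1) h0 expr0n /= mulr0 mulr0 !sub0r.
  by rewrite oppr0 sub0r => /eqP; rewrite oppr_eq0 oner_eq0.
have HT : one_param_rels (u * (delta + 1) ^+ 2) (fun i => R i + delta *: (E i * R i)) E.
  apply: (@transfer _ _ _ u v _ _ delta R E _ _ HA); first by rewrite addrC.
  apply/eqP; rewrite -subr_eq0; apply/eqP; rewrite -hq; ring.
split; first exact: HT.
have [f [fT fE funiq]] := UB A _ _ HT.
pose d' := - delta / (1 + delta).
have hd : delta + d' + d' * delta = 0.
  rewrite /d'; field; exact: d1.
have HA' : two_param_rels u v (fun i => T i + d' *: (E' i * T i)) E'.
  apply: (@transfer _ _ _ _ _ u v d' T E' _ _ HB).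
    rewrite /d'; field; exact: d1.
  apply: (@mulIf _ (1 + delta)) => //.
  have h1 : (1 + d') * (1 + delta) = 1 by rewrite /d'; field; exact: d1.
  have hq' : u * (delta + 1) ^+ 2 - 1 = (v - 1) * (delta + 1).
    apply/eqP; rewrite -subr_eq0; apply/eqP; rewrite -hq; ring.
  transitivity (u * (delta + 1) ^+ 2 - 1); first by rewrite hq' (addrC 1 delta).
  rewrite /d'; field; exact: d1.
have [g [gR gE guniq]] := UA B _ _ HA'.
have [h0 [_ _ huB]] := UB B T E' HB.
have [k0 [_ _ huA]] := UA A R E HA.
exists f; split => //.
exists g.
- move=> x.
  have -> : g (f x) = (g \o f) x by [].
  transitivity (h0 x); last by symmetry; apply: (huB idfun).
  apply: (huB (g \o f)) => i /=; last by rewrite fE gE.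
  have e : g (f (T i)) = g (R i) + delta *: (g (E i) * g (R i)) by rewrite fT linearD linearZ rmorphM.
  change (g (f (T i)) = T i); rewrite e gR gE.
  apply: back; first by case: HB => _ [].
  by rewrite -hd; ring.
- move=> x.
  have -> : f (g x) = (f \o g) x by [].
  transitivity (k0 x); last by symmetry; apply: (huA idfun).
  apply: (huA (f \o g)) => i /=; last by rewrite gE fE.
  have e : f (g (R i)) = f (T i) + d' *: (f (E' i) * f (T i)) by rewrite gR linearD linearZ rmorphM.
  change (f (g (R i)) = R i); rewrite e fT fE.
  apply: back; first by case: HA => _ [].
  exact: hd.
Qed.
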